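(* Let $u:\mathbb{R}^2\to\mathbb{R}^2$ be a continuous divergence-free vector field such that $|u|\neq0$ on a domain $\mathcal{D}\subset\mathbb{R}^2$. Then for any $a\in\mathcal D$, the solution $X(a,t)$ of $\frac{d}{dt}X(a,t)=u(X(a,t))$, $X(a,0)=a$, is unique (forward and backward in time) as long as it stays in $\mathcal{D}$. *)

(* Defs.v *)
From Stdlib Require Import Reals.
Open Scope R_scope.

Definition pt := (R * R)%type.

Definition norm2 (p : pt) : R := sqrt (fst p ^ 2 + snd p ^ 2).
Definition dist2 (p q : pt) : R := norm2 (fst p - fst q, snd p - snd q).

Definition cont2 (u : pt -> pt) : Prop :=
  forall p eps, 0 < eps -> exists delta, 0 < delta /\
    forall q, dist2 q p < delta -> dist2 (u q) (u p) < eps.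

Definition cont2s (f : R -> R -> R) : Prop :=
  forall x y eps, 0 < eps -> exists delta, 0 < delta /\
    forall x' y', dist2 (x', y') (x, y) < delta -> Rabs (f x' y' - f x y) < eps.

(* [f] is Riemann integrable on [a,b] with integral [v]
   (RiemannInt does not depend on the integrability proof). *)
Definition RInt_is (f : R -> R) (a b v : R) : Prop :=
  exists pr : Riemann_integrable f a b, RiemannInt pr = v.

Definition DInt_square_is (g : R -> R -> R) (L v : R) : Prop :=
  exists F : R -> R,
    (forall y, RInt_is (fun x => g x y) (-L) L (F y)) /\ RInt_is F (-L) L v.

Definition C1c_test (phi phix phiy : R -> R -> R) (L : R) : Prop :=
  0 < L /\
  (forall x y, derivable_pt_lim (fun s => phi s y) x (phix x y)) /\
  (forall x y, derivable_pt_lim (fun s => phi x s) y (phiy x y)) /\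
  cont2s phix /\ cont2s phiy /\
  (forall x y, L <= Rabs x \/ L <= Rabs y -> phi x y = 0).

(* Divergence-free in the sense of distributions:
   integral of u . grad phi = 0 for every compactly supported C^1 test fn. *)
Definition div_free (u : pt -> pt) : Prop :=
  forall phi phix phiy L, C1c_test phi phix phiy L ->
    DInt_square_is
      (fun x y => fst (u (x, y)) * phix x y + snd (u (x, y)) * phiy x y) L 0.

Definition open2 (D : pt -> Prop) : Prop :=
  forall p, D p -> exists r, 0 < r /\ forall q, dist2 q p < r -> D q.

(* Domain = nonempty open connected set *)
Definition domain2 (D : pt -> Prop) : Prop :=
  (exists p, D p) /\ open2 D /\
  forall U V : pt -> Prop, open2 U -> open2 V ->
    (forall p, D p -> U p \/ V p) ->
    (forall p, D p -> U p -> V p -> False) ->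
    (forall p, D p -> ~ U p) \/ (forall p, D p -> ~ V p).

Definition open_int_set (I : R -> Prop) : Prop :=
  (forall s t r, I s -> I t -> s <= r <= t -> I r) /\
  (forall t, I t -> exists r, 0 < r /\ forall s, Rabs (s - t) < r -> I s).

Definition is_solution (u : pt -> pt) (a : pt) (I : R -> Prop) (X : R -> pt) : Prop :=
  X 0 = a /\
  forall t, I t ->
    derivable_pt_lim (fun s => fst (X s)) t (fst (u (X t))) /\
    derivable_pt_lim (fun s => snd (X s)) t (snd (u (X t))).

(* Main.v *)
Require Import Defs.
From Stdlib Require Import Reals Lra Classical ClassicalEpsilon.
From Coquelicot Require Import Coquelicot.
Open Scope R_scope.

Definition ctn (f : R -> R) x := forall e, 0 < e -> exists d, 0 < d /\
  forall y, Rabs (y - x) < d -> Rabs (f y - f x) < e.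

Lemma ctn_continuous f x : ctn f x -> continuous f x.
Proof.
  intro H. apply continuity_pt_filterlim. intros e He.
  destruct (H e He) as [d [Hd H']]. exists d; split; auto.
  intros y [_ Hy]. apply H'. exact Hy.
Qed.

Lemma continuous_ctn f x : continuous f x -> ctn f x.
Proof.
  intro H. apply continuity_pt_filterlim in H. intros e He.
  destruct (H e He) as [d [Hd H']]. exists d; split; auto.
  intros y Hy. destruct (Req_dec y x) as [->|Hn].
  - unfold Rminus; rewrite Rplus_opp_r, Rabs_R0; auto.
  - apply H'. split; auto. split; [exact I| auto].
Qed.

Lemma ctn_plus f g x : ctn f x -> ctn g x -> ctn (fun z => f z + g z) x.
Proof. intros; apply continuous_ctn; apply (continuous_plus f g); apply ctn_continuous; auto. Qed.
Lemma ctn_minus f g x : ctn f x -> ctn g x -> ctn (fun z => f z - g z) x.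
Proof. intros; apply continuous_ctn; apply (continuous_minus f g); apply ctn_continuous; auto. Qed.
Lemma ctn_mult f g x : ctn f x -> ctn g x -> ctn (fun z => f z * g z) x.
Proof. intros; apply continuous_ctn; apply (continuous_mult f g); apply ctn_continuous; auto. Qed.
Lemma ctn_opp f x : ctn f x -> ctn (fun z => - f z) x.
Proof. intros; apply continuous_ctn; apply (continuous_opp f); apply ctn_continuous; auto. Qed.
Lemma ctn_const c x : ctn (fun _ => c) x.
Proof. apply continuous_ctn; apply continuous_const. Qed.
Lemma ctn_id x : ctn (fun z => z) x.
Proof. apply continuous_ctn; apply continuous_id. Qed.
Lemma ctn_comp f g x : ctn f x -> ctn g (f x) -> ctn (fun z => g (f z)) x.
Proof. intros; apply continuous_ctn; apply (continuous_comp f g); apply ctn_continuous; auto. Qed.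

Lemma ctn_lip f x K : 0 < K -> (forall y, Rabs (f y - f x) <= K * Rabs (y - x)) -> ctn f x.
Proof.
  intros HK H e He. exists (e / K). split. apply Rdiv_lt_0_compat; auto.
  intros y Hy. eapply Rle_lt_trans. apply H.
  apply Rmult_lt_compat_l with (r:=K) in Hy; auto.
  replace (K * (e / K)) with e in Hy by (field; lra). exact Hy.
Qed.

Lemma exRI f a b : (forall z, Rmin a b <= z <= Rmax a b -> ctn f z) -> ex_RInt f a b.
Proof. intros H. apply (ex_RInt_continuous (V:=R_CompleteNormedModule)). intros z Hz. apply ctn_continuous; auto. Qed.

Lemma exRI_all f a b : (forall z, ctn f z) -> ex_RInt f a b.
Proof. intros H; apply exRI; auto. Qed.

Lemma RIplus f g a b : ex_RInt f a b -> ex_RInt g a b ->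
  RInt (fun x => f x + g x) a b = RInt f a b + RInt g a b.
Proof. intros; apply (RInt_plus f g a b); auto. Qed.
Lemma RIminus f g a b : ex_RInt f a b -> ex_RInt g a b ->
  RInt (fun x => f x - g x) a b = RInt f a b - RInt g a b.
Proof. intros; apply (RInt_minus f g a b); auto. Qed.
Lemma RIscal f a b c : ex_RInt f a b ->
  RInt (fun x => c * f x) a b = c * RInt f a b.
Proof. intros; apply (RInt_scal f a b c); auto. Qed.
Lemma RIscalr f a b c : ex_RInt f a b ->
  RInt (fun x => f x * c) a b = RInt f a b * c.
Proof. intros. rewrite Rmult_comm, <- RIscal; auto. apply RInt_ext; intros x _; apply Rmult_comm. Qed.
Lemma RIconst a b c : RInt (fun _ => c) a b = (b - a) * c.
Proof. exact (RInt_const (V:=R_CompleteNormedModule) a b c). Qed.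
Lemma RIchasles f a b c : ex_RInt f a b -> ex_RInt f b c ->
  RInt f a b + RInt f b c = RInt f a c.
Proof. intros; apply (RInt_Chasles f a b c); auto. Qed.
Lemma RIswap f a b : ex_RInt f a b -> RInt f b a = - RInt f a b.
Proof. intro H. symmetry. exact (opp_RInt_swap (V:=R_CompleteNormedModule) f a b H). Qed.

Lemma RIabs_bound f a b M : ex_RInt f a b ->
  (forall t, Rmin a b <= t <= Rmax a b -> Rabs (f t) <= M) ->
  Rabs (RInt f a b) <= Rabs (b - a) * M.
Proof.
  intros Hf H. destruct (Rle_dec a b) as [Hab|Hab].
  - rewrite (Rabs_right (b - a)) by lra. apply abs_RInt_le_const; auto.
    intros t Ht; apply H. rewrite Rmin_left, Rmax_right; lra.
  - replace (RInt f a b) with (- RInt f b a) by (rewrite (RIswap f b a); [ring| apply ex_RInt_swap; auto]).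
    rewrite Rabs_Ropp.
    rewrite (Rabs_left (b - a)) by lra. replace (- (b - a)) with (a - b) by ring.
    apply abs_RInt_le_const; auto. lra. apply ex_RInt_swap; auto.
    intros t Ht; apply H. rewrite Rmin_right, Rmax_left; lra.
Qed.

Lemma RIlow f a b m : a <= b -> ex_RInt f a b ->
  (forall t, a <= t <= b -> m <= f t) -> m * (b - a) <= RInt f a b.
Proof.
  intros Hab Hf H. rewrite Rmult_comm, <- RIconst.
  apply RInt_le; auto. apply exRI_all; intros; apply ctn_const.
  intros; apply H; lra.
Qed.

Lemma sqrt_sum_le a b : sqrt (a ^ 2 + b ^ 2) <= Rabs a + Rabs b.
Proof.
  rewrite <- (sqrt_pow2 (Rabs a + Rabs b)).
  2: { apply Rplus_le_le_0_compat; apply Rabs_pos. }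
  apply sqrt_le_1_alt.
  rewrite <- (pow2_abs a), <- (pow2_abs b).
  pose proof (Rabs_pos a); pose proof (Rabs_pos b). nra.
Qed.

Lemma abs_le_sqrt a b : Rabs a <= sqrt (a ^ 2 + b ^ 2).
Proof.
  rewrite <- (sqrt_pow2 (Rabs a)) by apply Rabs_pos. apply sqrt_le_1_alt.
  rewrite pow2_abs. pose proof (pow2_ge_0 b). lra.
Qed.

Lemma dist2_lt a b c d del : Rabs (a - c) < del / 2 -> Rabs (b - d) < del / 2 ->
  dist2 (a, b) (c, d) < del.
Proof.
  intros H1 H2. unfold dist2, norm2; simpl.
  eapply Rle_lt_trans. apply sqrt_sum_le. lra.
Qed.

Lemma dist2_fst p q : Rabs (fst p - fst q) <= dist2 p q.
Proof. unfold dist2, norm2; simpl. apply abs_le_sqrt. Qed.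
Lemma dist2_snd p q : Rabs (snd p - snd q) <= dist2 p q.
Proof. unfold dist2, norm2; simpl. rewrite Rplus_comm. apply abs_le_sqrt. Qed.

Definition c2d (f : R -> R -> R) := forall x y, continuity_2d_pt f x y.

Lemma cont2_fst u : cont2 u -> c2d (fun x y => fst (u (x, y))).
Proof.
  intros Hu x y [e He]. destruct (Hu (x, y) e He) as [d [Hd H]].
  exists (mkposreal (d/2) ltac:(lra)). simpl. intros x' y' H1 H2.
  eapply Rle_lt_trans. apply dist2_fst. apply H. apply dist2_lt; lra.
Qed.
Lemma cont2_snd u : cont2 u -> c2d (fun x y => snd (u (x, y))).
Proof.
  intros Hu x y [e He]. destruct (Hu (x, y) e He) as [d [Hd H]].
  exists (mkposreal (d/2) ltac:(lra)). simpl. intros x' y' H1 H2.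
  eapply Rle_lt_trans. apply dist2_snd. apply H. apply dist2_lt; lra.
Qed.

Lemma c2_1 f x y : continuity_2d_pt f x y -> ctn (fun z => f z y) x.
Proof.
  intros H e He. destruct (H (mkposreal e He)) as [d Hd]. exists d; split.
  apply cond_pos. intros z Hz. apply Hd; auto. unfold Rminus; rewrite Rplus_opp_r, Rabs_R0; apply cond_pos.
Qed.
Lemma c2_2 f x y : continuity_2d_pt f x y -> ctn (fun z => f x z) y.
Proof.
  intros H e He. destruct (H (mkposreal e He)) as [d Hd]. exists d; split.
  apply cond_pos. intros z Hz. apply Hd; auto. unfold Rminus; rewrite Rplus_opp_r, Rabs_R0; apply cond_pos.
Qed.

Lemma ctn_cpt f x : ctn f x -> continuity_pt f x.
Proof. intro H. apply continuity_pt_filterlim. apply ctn_continuous; auto. Qed.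

Lemma c2_sep1 f x y : ctn f x -> continuity_2d_pt (fun a _ => f a) x y.
Proof.
  intro H. apply (continuity_1d_2d_pt_comp f (fun a _ => a)). apply ctn_cpt; auto.
  apply continuity_2d_pt_id1.
Qed.
Lemma c2_sep2 f x y : ctn f y -> continuity_2d_pt (fun _ b => f b) x y.
Proof.
  intro H. apply (continuity_1d_2d_pt_comp f (fun _ b => b)). apply ctn_cpt; auto.
  apply continuity_2d_pt_id2.
Qed.

Lemma c2d_cont2s f : c2d f -> cont2s f.
Proof.
  intros H x y e He. destruct (H x y (mkposreal e He)) as [d Hd]. exists d. split. apply cond_pos.
  intros x' y' Hxy. apply Hd.
  - eapply Rle_lt_trans. apply (dist2_fst (x', y') (x, y)). auto.
  - eapply Rle_lt_trans. apply (dist2_snd (x', y') (x, y)). auto.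
Qed.


Lemma RI_FTC (F f : R -> R) a b :
  (forall x, Rmin a b <= x <= Rmax a b -> is_derive F x (f x)) ->
  (forall x, Rmin a b <= x <= Rmax a b -> ctn f x) ->
  RInt f a b = F b - F a.
Proof.
  intros H1 H2. apply is_RInt_unique.
  apply (is_RInt_derive (V:=R_CompleteNormedModule) F f a b H1).
  intros; apply ctn_continuous; auto.
Qed.

Definition T (e z : R) := Rmax 0 (e - Rabs z) / (e * e).

Lemma T_nonneg e z : 0 < e -> 0 <= T e z.
Proof.
  intro He. unfold T. apply Rmult_le_pos. apply Rmax_l.
  left. apply Rinv_0_lt_compat. nra.
Qed.

Lemma T_zero e z : e <= Rabs z -> T e z = 0.
Proof. intro H. unfold T. rewrite Rmax_left by lra. unfold Rdiv; ring. Qed.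

Lemma Rmax0_lip a b : Rabs (Rmax 0 a - Rmax 0 b) <= Rabs (a - b).
Proof.
  unfold Rmax; destruct (Rle_dec 0 a); destruct (Rle_dec 0 b);
  repeat (first [rewrite Rabs_right by lra | rewrite Rabs_left by lra | rewrite Rabs_R0]); 
  unfold Rabs; repeat destruct Rcase_abs; lra.
Qed.

Lemma T_ctn e z : 0 < e -> ctn (T e) z.
Proof.
  intro He. apply ctn_lip with (K := / (e * e)). apply Rinv_0_lt_compat; nra.
  intro y. unfold T. unfold Rdiv. rewrite <- Rmult_minus_distr_r.
  rewrite Rabs_mult. rewrite (Rabs_right (/ (e * e))) by (left; apply Rinv_0_lt_compat; nra).
  rewrite Rmult_comm. apply Rmult_le_compat_l. left; apply Rinv_0_lt_compat; nra.
  eapply Rle_trans. apply Rmax0_lip.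
  replace (e - Rabs y - (e - Rabs z)) with (- (Rabs y - Rabs z)) by ring.
  rewrite Rabs_Ropp. apply Rabs_triang_inv2.
Qed.

Lemma T_int e : 0 < e -> RInt (T e) (-e) e = 1.
Proof.
  intro He. rewrite <- (RIchasles _ (-e) 0 e); try (apply exRI_all; intros; apply T_ctn; auto).
  rewrite (RI_FTC (fun z => (e * z + z * z / 2) / (e * e))).
  rewrite (RI_FTC (fun z => (e * z - z * z / 2) / (e * e)) _ 0 e).
  match goal with |- ?a = ?b => change (@eq R a b) end. field. lra.
  - intros x Hx. rewrite Rmin_left, Rmax_right in Hx by lra.
    replace (T e x) with ((e - x) / (e * e)).
    auto_derive; auto. field; lra.
    unfold T. rewrite Rmax_right. rewrite Rabs_right by lra. reflexivity.
    rewrite Rabs_right by lra. lra.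
  - intros; apply T_ctn; auto.
  - intros x Hx. rewrite Rmin_left, Rmax_right in Hx by lra.
    replace (T e x) with ((e + x) / (e * e)).
    auto_derive; auto. field; lra.
    unfold T. rewrite Rmax_right. destruct (Req_dec x 0). subst. rewrite Rabs_R0. f_equal; ring.
    rewrite Rabs_left by lra. f_equal; ring.
    destruct (Rle_dec 0 x). rewrite Rabs_right; lra. rewrite Rabs_left; lra.
  - intros; apply T_ctn; auto.
Qed.

Ltac Req := match goal with |- ?a = ?b => change (@eq R a b) end.

Lemma ctn_abs f x : ctn f x -> ctn (fun z => Rabs (f z)) x.
Proof. intro H. apply ctn_comp; auto. apply continuous_ctn, continuous_Rabs. Qed.

Lemma ctn_shift f c x : ctn f (x - c) -> ctn (fun z => f (z - c)) x.
Proof. intro H. apply (ctn_comp (fun z => z - c) f). apply ctn_minus; [apply ctn_id|apply ctn_const]. auto. Qed.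

Lemma RI_zero f a b : (forall x, Rmin a b < x < Rmax a b -> f x = 0) -> RInt f a b = 0.
Proof.
  intro H. rewrite (RInt_ext f (fun _ => 0)) by auto. rewrite RIconst. Req; ring.
Qed.

Lemma T_shift_int e c l r : 0 < e -> l <= c - e -> c + e <= r ->
  RInt (fun x => T e (x - c)) l r = 1.
Proof.
  intros He H1 H2.
  assert (Hi : forall a b, ex_RInt (fun x => T e (x - c)) a b).
  { intros; apply exRI_all; intros; apply ctn_shift, T_ctn; auto. }
  rewrite <- (RIchasles _ l (c - e) r) by auto.
  rewrite <- (RIchasles _ (c - e) (c + e) r) by auto.
  rewrite (RI_zero _ l (c - e)).
  rewrite (RI_zero _ (c + e) r).
  rewrite (RInt_ext (fun x => T e (x - c)) (fun y => scal 1 (T e (1 * y + - c)))).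
  rewrite (RInt_comp_lin (V:=R_CompleteNormedModule)).
  replace (1 * (c - e) + - c) with (- e) by ring.
  replace (1 * (c + e) + - c) with e by ring.
  rewrite T_int by auto. Req; ring.
  apply exRI_all; intros; apply T_ctn; auto.
  - intros x _. unfold scal; simpl; unfold mult; simpl. rewrite Rmult_1_l. f_equal. ring.
  - intros x Hx. rewrite Rmin_left, Rmax_right in Hx by lra. apply T_zero.
    rewrite Rabs_right; lra.
  - intros x Hx. rewrite Rmin_left, Rmax_right in Hx by lra. apply T_zero.
    rewrite Rabs_left; lra.
Qed.

Definition Fc e z := RInt (T e) (- e) z.

Lemma Fc_deriv e z : 0 < e -> is_derive (Fc e) z (T e z).
Proof.
  intro He. apply (is_derive_RInt (V:=R_CompleteNormedModule) (T e) (Fc e) (- e) z).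
  apply filter_forall. intro b. apply RInt_correct. apply exRI_all; intros; apply T_ctn; auto.
  apply ctn_continuous, T_ctn; auto.
Qed.

Lemma Fc_low e z : 0 < e -> z <= - e -> Fc e z = 0.
Proof.
  intros He Hz. unfold Fc. apply RI_zero. intros x Hx.
  rewrite Rmin_right, Rmax_left in Hx by lra. apply T_zero. rewrite Rabs_left; lra.
Qed.

Lemma Fc_high e z : 0 < e -> e <= z -> Fc e z = 1.
Proof.
  intros He Hz. unfold Fc. rewrite <- (RIchasles _ (-e) e z) by (apply exRI_all; intros; apply T_ctn; auto).
  rewrite T_int by auto. rewrite (RI_zero _ e z). Req; ring.
  intros x Hx. rewrite Rmin_left, Rmax_right in Hx by lra. apply T_zero. rewrite Rabs_right; lra.
Qed.

Definition W e c0 c1 z := Fc e (z - c0) - Fc e (z - c1).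
Definition Wd e c0 c1 z := T e (z - c0) - T e (z - c1).

Lemma Fc_shift_deriv e c z : 0 < e -> is_derive (fun z => Fc e (z - c)) z (T e (z - c)).
Proof.
  intro He. 
  assert (H := is_derive_comp (Fc e) (fun z => z - c) z (T e (z - c)) 1).
  replace (T e (z - c)) with (scal 1 (T e (z - c))). apply H.
  apply Fc_deriv; auto.
  auto_derive; auto. exact (Rmult_1_l _).
Qed.

Lemma W_deriv e c0 c1 z : 0 < e -> is_derive (W e c0 c1) z (Wd e c0 c1 z).
Proof.
  intro He. unfold W, Wd.
  apply (is_derive_minus (fun z => Fc e (z - c0)) (fun z => Fc e (z - c1)) z); apply Fc_shift_deriv; auto.
Qed.

Lemma Wd_ctn e c0 c1 z : 0 < e -> ctn (Wd e c0 c1) z.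
Proof. intro He. unfold Wd. apply ctn_minus; apply ctn_shift, T_ctn; auto. Qed.

Lemma W_ctn e c0 c1 z : 0 < e -> ctn (W e c0 c1) z.
Proof. intro He. apply continuous_ctn. apply (ex_derive_continuous (K:=R_AbsRing) (V:=R_NormedModule) (W e c0 c1)). eexists. apply W_deriv; auto. Qed.

Lemma W_zero e c0 c1 L z : 0 < e -> Rabs c0 + e <= L -> Rabs c1 + e <= L -> L <= Rabs z ->
  W e c0 c1 z = 0.
Proof.
  intros He H0 H1 Hz. unfold W.
  destruct (Rle_dec 0 z).
  - rewrite Rabs_right in Hz by lra.
    rewrite !Fc_high; try ring; auto.
    + pose proof (Rle_abs c1); lra.
    + pose proof (Rle_abs c0); lra.
  - rewrite Rabs_left in Hz by lra.
    rewrite !Fc_low; try ring; auto.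
    + pose proof (Rle_abs (-c1)); rewrite Rabs_Ropp in *; lra.
    + pose proof (Rle_abs (-c0)); rewrite Rabs_Ropp in *; lra.
Qed.

Lemma AI k c l r e eta : 0 < e -> l <= c - e -> c + e <= r ->
  (forall x, l <= x <= r -> ctn k x) ->
  (forall x, Rabs (x - c) <= e -> Rabs (k x - k c) <= eta) ->
  Rabs (RInt (fun x => T e (x - c) * k x) l r - k c) <= eta.
Proof.
  intros He H1 H2 Hk Hb.
  assert (Heta : 0 <= eta).
  { eapply Rle_trans; [apply Rabs_pos|]. apply (Hb c). unfold Rminus; rewrite Rplus_opp_r, Rabs_R0; lra. }
  assert (HlR : Rmin l r = l) by (apply Rmin_left; lra).
  assert (HrR : Rmax l r = r) by (apply Rmax_right; lra).
  assert (HT : forall x, ctn (fun x => T e (x - c)) x).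
  { intros; apply ctn_shift, T_ctn; auto. }
  assert (E1 : k c = RInt (fun x => T e (x - c) * k c) l r).
  { rewrite RIscalr. rewrite T_shift_int; auto. Req; ring. apply exRI_all; auto. }
  rewrite E1. rewrite <- RIminus.
  2: { apply exRI; intros z Hz; apply ctn_mult; auto. apply Hk. lra. }
  2: { apply exRI_all; intros z; apply ctn_mult; auto. apply ctn_const. }
  eapply Rle_trans. apply abs_RInt_le. lra.
  { apply exRI; intros z Hz; apply ctn_minus; apply ctn_mult; auto. apply Hk; lra. apply ctn_const. }
  replace eta with (RInt (fun x => T e (x - c) * eta) l r).
  2: { rewrite RIscalr. rewrite T_shift_int; auto. Req; ring. apply exRI_all; auto. }
  apply RInt_le. lra.
  { apply exRI; intros z Hz; apply ctn_abs, ctn_minus; apply ctn_mult; auto. apply Hk; lra. apply ctn_const. }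
  { apply exRI_all; intros z; apply ctn_mult; auto. apply ctn_const. }
  intros x Hx. rewrite <- Rmult_minus_distr_l. rewrite Rabs_mult.
  rewrite (Rabs_right (T e (x - c))) by (apply Rle_ge, T_nonneg; auto).
  destruct (Rle_dec (Rabs (x - c)) e).
  - apply Rmult_le_compat_l. apply T_nonneg; auto. apply Hb; auto.
  - rewrite T_zero by lra. lra.
Qed.


Lemma c2d_ex f l r y : c2d f -> ex_RInt (fun x => f x y) l r.
Proof. intro H. apply exRI_all. intro z. apply c2_1, H. Qed.

Lemma param_ctn f l r y : c2d f -> ctn (fun y => RInt (fun x => f x y) l r) y.
Proof.
  intros Hf e He.
  set (e' := e / (Rabs (r - l) + 1)).
  assert (He' : 0 < e') by (unfold e'; apply Rdiv_lt_0_compat; auto; pose proof (Rabs_pos (r - l)); lra).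
  destruct (uniform_continuity_2d f (Rmin l r) (Rmax l r) (y - 1) (y + 1)
     (fun x y _ _ => Hf x y) (mkposreal e' He')) as [d Hd].
  exists (Rmin d 1). split. apply Rmin_glb_lt; [apply cond_pos|lra].
  intros y' Hy'. rewrite <- RIminus by (apply c2d_ex; auto).
  eapply Rle_lt_trans. apply RIabs_bound with (M := e').
  apply exRI_all. intro z. apply ctn_minus; apply c2_1, Hf.
  intros t Ht. left. apply (Hd t y t y'); auto.
  - lra.
  - pose proof (Rmin_r d 1). apply Rabs_def2 in Hy'. lra.
  - unfold Rminus; rewrite Rplus_opp_r, Rabs_R0; apply cond_pos.
  - pose proof (Rmin_l d 1). lra.
  - unfold e'. pose proof (Rabs_pos (r - l)).
    replace (Rabs (r - l) * (e / (Rabs (r - l) + 1))) with (e * (Rabs (r - l) / (Rabs (r - l) + 1))) by (field; lra).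
    rewrite <- (Rmult_1_r e) at 2. apply Rmult_lt_compat_l; auto.
    apply Rmult_lt_reg_r with (Rabs (r - l) + 1). lra. field_simplify; lra.
Qed.

Lemma is_derive_ctn f x l : is_derive f x l -> ctn f x.
Proof. intro H. apply continuous_ctn. apply (ex_derive_continuous (K:=R_AbsRing) (V:=R_NormedModule) f). eexists; eauto. Qed.

Lemma is_derive_mult' f g x df dg : is_derive f x df -> is_derive g x dg ->
  is_derive (fun z => f z * g z) x (df * g x + f x * dg).
Proof.
  intros H1 H2. apply (is_derive_mult f g x df dg H1 H2). intros; apply Rmult_comm.
Qed.

Lemma by_parts f f' g g' l r :
  (forall x, Rmin l r <= x <= Rmax l r -> is_derive f x (f' x) /\ is_derive g x (g' x) /\ ctn f' x /\ ctn g' x) ->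
  RInt (fun x => f' x * g x) l r = f r * g r - f l * g l - RInt (fun x => f x * g' x) l r.
Proof.
  intros H.
  assert (E : RInt (fun x => f' x * g x + f x * g' x) l r = f r * g r - f l * g l).
  { apply (RI_FTC (fun x => f x * g x)).
    - intros x Hx. destruct (H x Hx) as (H1 & H2 & _). apply is_derive_mult'; auto.
    - intros x Hx. destruct (H x Hx) as (H1 & H2 & H3 & H4).
      apply ctn_plus; apply ctn_mult; auto; eapply is_derive_ctn; eauto. }
  rewrite RIplus in E. lra.
  - apply exRI; intros x Hx. destruct (H x Hx) as (H1 & H2 & H3 & H4).
    apply ctn_mult; auto; eapply is_derive_ctn; eauto.
  - apply exRI; intros x Hx. destruct (H x Hx) as (H1 & H2 & H3 & H4).
    apply ctn_mult; auto; eapply is_derive_ctn; eauto.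
Qed.

Lemma RInt_is_eq f a b v : RInt_is f a b v -> RInt f a b = v.
Proof. intros [pr Hpr]. rewrite <- Hpr. apply RInt_Reals. Qed.

Lemma is_derive_mult_const f x l c : is_derive f x l -> is_derive (fun z => f z * c) x (l * c).
Proof.
  intro H. replace (l * c) with (l * c + f x * 0) by ring. apply is_derive_mult'; auto.
  apply is_derive_Reals; apply derivable_pt_lim_const.
Qed.
Lemma is_derive_const_mult f x l c : is_derive f x l -> is_derive (fun z => c * f z) x (c * l).
Proof.
  intro H. replace (c * l) with (0 * f x + c * l) by ring. apply is_derive_mult'; auto.
  apply is_derive_Reals; apply derivable_pt_lim_const.
Qed.

Section Weak.
Variable u : pt -> pt.
Hypothesis Hu : cont2 u.
Hypothesis Hdiv : div_free u.
Let V1 x y := fst (u (x, y)).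
Let V2 x y := snd (u (x, y)).

Lemma weak_sep (a a' b b' : R -> R) L : 0 < L ->
  (forall x, is_derive a x (a' x) /\ ctn a' x) ->
  (forall x, is_derive b x (b' x) /\ ctn b' x) ->
  (forall z, L <= Rabs z -> a z = 0) ->
  (forall z, L <= Rabs z -> b z = 0) ->
  RInt (fun y => b y * RInt (fun x => V1 x y * a' x) (-L) L
               + b' y * RInt (fun x => V2 x y * a x) (-L) L) (-L) L = 0.
Proof.
  intros HL Ha Hb Ha0 Hb0.
  assert (Hc1 : c2d V1) by apply cont2_fst, Hu.
  assert (Hc2 : c2d V2) by apply cont2_snd, Hu.
  assert (Hca : forall x, ctn a x) by (intro x; destruct (Ha x); eapply is_derive_ctn; eauto).
  assert (Hcb : forall x, ctn b x) by (intro x; destruct (Hb x); eapply is_derive_ctn; eauto).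
  destruct (Hdiv (fun x y => a x * b y) (fun x y => a' x * b y) (fun x y => a x * b' y) L)
    as [F [HF1 HF2]].
  - split; [auto|]. split; [|split; [|split; [|split]]].
    + intros x y. apply is_derive_Reals. apply is_derive_mult_const. apply Ha.
    + intros x y. apply is_derive_Reals. apply is_derive_const_mult. apply Hb.
    + apply c2d_cont2s. intros x y. apply continuity_2d_pt_mult.
      apply c2_sep1, Ha. apply c2_sep2, Hcb.
    + apply c2d_cont2s. intros x y. apply continuity_2d_pt_mult.
      apply c2_sep1, Hca. apply c2_sep2, Hb.
    + intros x y [H|H]. rewrite Ha0; auto; ring. rewrite Hb0; auto; ring.
  - apply RInt_is_eq in HF2. rewrite <- HF2. apply RInt_ext. intros y _.
    rewrite <- (RInt_is_eq _ _ _ _ (HF1 y)).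
    assert (Hi1 : ex_RInt (fun x => V1 x y * a' x) (-L) L).
    { apply exRI_all; intro; apply ctn_mult. apply c2_1, Hc1. apply Ha. }
    assert (Hi2 : ex_RInt (fun x => V2 x y * a x) (-L) L).
    { apply exRI_all; intro; apply ctn_mult. apply c2_1, Hc2. apply Hca. }
    rewrite <- !RIscal by auto. rewrite <- RIplus.
    apply RInt_ext. intros x _. unfold V1, V2. Req; ring.
    all: apply exRI_all; intro; apply ctn_mult; [apply ctn_const|apply ctn_mult]; 
      first [apply c2_1, Hc1 | apply c2_1, Hc2 | apply Ha | apply Hca].
Qed.
End Weak.


Lemma small_zero x : (forall eta, 0 < eta -> Rabs x <= eta) -> x = 0.
Proof.
  intro H. destruct (Req_dec x 0); auto. exfalso.
  assert (0 < Rabs x) by (apply Rabs_pos_lt; auto).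
  specialize (H (Rabs x / 2) ltac:(lra)). lra.
Qed.

Lemma prim_deriv f a y : (forall z, ctn f z) -> is_derive (fun y => RInt f a y) y (f y).
Proof.
  intro Hf. apply (is_derive_RInt (V:=R_CompleteNormedModule) f (fun y => RInt f a y) a y).
  apply filter_forall. intro b. apply RInt_correct. apply exRI_all; auto.
  apply ctn_continuous; auto.
Qed.

Lemma c2d_mult_sep1 f g : c2d f -> (forall x, ctn g x) -> c2d (fun x y => f x y * g x).
Proof. intros Hf Hg x y. apply continuity_2d_pt_mult; auto. apply c2_sep1; auto. Qed.

Lemma AI_ctn (Q : R -> R) c eta l r : ctn Q c -> 0 < eta -> l + 1 <= c -> c + 1 <= r ->
  (forall z, ctn Q z) ->
  exists d, 0 < d /\ forall e, 0 < e -> e <= d ->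
    Rabs (RInt (fun x => T e (x - c) * Q x) l r - Q c) <= eta.
Proof.
  intros HQ He H1 H2 HQa. destruct (HQ eta He) as [d [Hd Hd']].
  exists (Rmin (d / 2) 1). split. apply Rmin_glb_lt; lra.
  intros e He1 He2. pose proof (Rmin_l (d/2) 1). pose proof (Rmin_r (d/2) 1).
  apply AI; auto; try lra. intros x Hx. left. apply Hd'. lra.
Qed.

Lemma abs_le_inv x a : Rabs x <= a -> - a <= x <= a.
Proof. unfold Rabs; destruct Rcase_abs; lra. Qed.

Section Flux.
Variable u : pt -> pt.
Hypothesis Hu : cont2 u.
Hypothesis Hdiv : div_free u.
Let V1 x y := fst (u (x, y)).
Let V2 x y := snd (u (x, y)).

Lemma stageA (a a' : R -> R) L y0 y1 :
  (forall x, is_derive a x (a' x) /\ ctn a' x) ->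
  (forall z, L <= Rabs z -> a z = 0) ->
  Rabs y0 + 1 <= L -> Rabs y1 + 1 <= L ->
  RInt (fun x => V2 x y1 * a x) (-L) L - RInt (fun x => V2 x y0 * a x) (-L) L
  = RInt (fun y => RInt (fun x => V1 x y * a' x) (-L) L) y0 y1.
Proof.
  intros Ha Ha0 Hy0 Hy1.
  assert (HL : 0 < L) by (pose proof (Rabs_pos y0); lra).
  assert (Hc1 : c2d V1) by apply cont2_fst, Hu.
  assert (Hc2 : c2d V2) by apply cont2_snd, Hu.
  assert (Hca : forall x, ctn a x) by (intro x; destruct (Ha x); eapply is_derive_ctn; eauto).
  set (A := fun y => (RInt (fun x => V1 x y * a' x) (-L) L : R)).
  set (G := fun y => (RInt (fun x => V2 x y * a x) (-L) L : R)).
  set (P := fun y => (RInt A (-L) y : R)).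
  assert (HA : forall y, ctn A y).
  { intro y. apply (param_ctn (fun x y => V1 x y * a' x)). apply c2d_mult_sep1; auto. apply Ha. }
  assert (HG : forall y, ctn G y).
  { intro y. apply (param_ctn (fun x y => V2 x y * a x)). apply c2d_mult_sep1; auto. }
  assert (HP : forall y, is_derive P y (A y)) by (intro; apply prim_deriv; auto).
  assert (HPc : forall y, ctn P y) by (intro; eapply is_derive_ctn; eauto).
  set (Q := fun y => G y - P y).
  assert (HQ : forall y, ctn Q y) by (intro; apply ctn_minus; auto).
  assert (Key : forall e, 0 < e -> e <= 1 ->
     RInt (fun y => T e (y - y0) * Q y) (-L) L - RInt (fun y => T e (y - y1) * Q y) (-L) L = 0).
  { intros e He He1.
    pose proof (weak_sep u Hu Hdiv a a' (W e y0 y1) (Wd e y0 y1) L HL Ha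
      (fun x => conj (W_deriv e y0 y1 x He) (Wd_ctn e y0 y1 x He)) Ha0) as HW.
    specialize (HW (fun z Hz => W_zero e y0 y1 L z He ltac:(lra) ltac:(lra) Hz)).
    fold V1 V2 A G in HW.
    assert (HWc : forall y, ctn (W e y0 y1) y) by (intro; apply W_ctn; auto).
    assert (HWd : forall y, ctn (Wd e y0 y1) y) by (intro; apply Wd_ctn; auto).
    rewrite RIplus in HW by (apply exRI_all; intro; apply ctn_mult; auto).
    rewrite (RInt_ext (fun y => W e y0 y1 y * A y) (fun y => A y * W e y0 y1 y)) in HW
      by (intros; apply Rmult_comm).
    rewrite (by_parts P A (W e y0 y1) (Wd e y0 y1)) in HW.
    2: { intros x _. split; [apply HP|split; [apply W_deriv; auto|split; auto]]. }
    rewrite !(W_zero e y0 y1 L) in HW; auto; try lra.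
    2: { rewrite Rabs_Ropp, Rabs_right; lra. }
    2: { rewrite Rabs_right; lra. }
    rewrite <- RIminus.
    2, 3: apply exRI_all; intro; apply ctn_mult; auto; apply ctn_shift, T_ctn; auto.
    rewrite (RInt_ext _ (fun y => Wd e y0 y1 y * G y - P y * Wd e y0 y1 y)).
    rewrite RIminus. unfold G in *; cbv beta in *; lra.
    1, 2: apply exRI_all; intro; apply ctn_mult; auto.
    intros x _. unfold Q, Wd. Req; ring. }
  assert (EQ : Q y0 = Q y1).
  { apply Rminus_diag_uniq. apply small_zero. intros eta Heta.
    destruct (AI_ctn Q y0 (eta/2) (-L) L (HQ y0) ltac:(lra)) as [d0 [Hd0 H0]]; auto.
    { pose proof (Rle_abs (- y0)). rewrite Rabs_Ropp in *. lra. }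
    { pose proof (Rle_abs y0). lra. }
    destruct (AI_ctn Q y1 (eta/2) (-L) L (HQ y1) ltac:(lra)) as [d1 [Hd1 H1]]; auto.
    { pose proof (Rle_abs (- y1)). rewrite Rabs_Ropp in *. lra. }
    { pose proof (Rle_abs y1). lra. }
    set (e := Rmin (Rmin d0 d1) 1).
    assert (He : 0 < e) by (unfold e; repeat apply Rmin_glb_lt; lra).
    assert (e <= d0 /\ e <= d1 /\ e <= 1) as (E0 & E1 & E2).
    { unfold e. pose proof (Rmin_l (Rmin d0 d1) 1). pose proof (Rmin_r (Rmin d0 d1) 1).
      pose proof (Rmin_l d0 d1). pose proof (Rmin_r d0 d1). lra. }
    specialize (H0 e He E0). specialize (H1 e He E1). specialize (Key e He E2).
    apply abs_le_inv in H0. apply abs_le_inv in H1. apply Rabs_le. lra. }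
  unfold Q, P in EQ.
  rewrite <- (RIchasles A (-L) y0 y1) in EQ by (apply exRI_all; auto).
  unfold G in EQ; cbv beta in EQ. unfold A in *. lra.
Qed.
End Flux.

Section Flux2.
Variable u : pt -> pt.
Hypothesis Hu : cont2 u.
Hypothesis Hdiv : div_free u.
Let V1 x y := fst (u (x, y)).
Let V2 x y := snd (u (x, y)).

Lemma claim1 x0 x1 y L eta : Rabs x0 + 1 <= L -> Rabs x1 + 1 <= L -> 0 < eta ->
  exists d, 0 < d /\ forall e, 0 < e -> e <= d -> e <= 1 ->
   Rabs (RInt (fun x => V2 x y * W e x0 x1 x) (-L) L - RInt (fun r => V2 r y) x0 x1) <= eta.
Proof.
  intros H0 H1 Heta.
  assert (HL : 0 < L) by (pose proof (Rabs_pos x0); lra).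
  assert (Hc2 : c2d V2) by apply cont2_snd, Hu.
  set (K := fun x => (RInt (fun r => V2 r y) x0 x : R)).
  assert (HK : forall x, is_derive K x (V2 x y)).
  { intro x. apply (prim_deriv (fun r => V2 r y)). intro; apply c2_1, Hc2. }
  assert (HKc : forall x, ctn K x) by (intro; eapply is_derive_ctn; eauto).
  destruct (AI_ctn K x0 (eta/2) (-L) L (HKc x0) ltac:(lra)) as [d0 [Hd0 E0]]; auto.
  { pose proof (Rle_abs (- x0)). rewrite Rabs_Ropp in *. lra. }
  { pose proof (Rle_abs x0). lra. }
  destruct (AI_ctn K x1 (eta/2) (-L) L (HKc x1) ltac:(lra)) as [d1 [Hd1 E1]]; auto.
  { pose proof (Rle_abs (- x1)). rewrite Rabs_Ropp in *. lra. }
  { pose proof (Rle_abs x1). lra. }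
  exists (Rmin d0 d1). split. apply Rmin_glb_lt; auto.
  intros e He Hed He1. pose proof (Rmin_l d0 d1). pose proof (Rmin_r d0 d1).
  specialize (E0 e He ltac:(lra)). specialize (E1 e He ltac:(lra)).
  rewrite (by_parts K (fun x => V2 x y) (W e x0 x1) (Wd e x0 x1)).
  2: { intros x _. split; [apply HK|split; [apply W_deriv; auto|split; [apply c2_1, Hc2|apply Wd_ctn; auto]]]. }
  rewrite !(W_zero e x0 x1 L); try lra.
  2: { rewrite Rabs_Ropp, Rabs_right; lra. }
  2: { rewrite Rabs_right; lra. }
  rewrite (RInt_ext _ (fun x => T e (x - x0) * K x - T e (x - x1) * K x)).
  2: { intros x _. unfold Wd. Req; ring. }
  rewrite RIminus.
  2, 3: apply exRI_all; intro; apply ctn_mult; auto; apply ctn_shift, T_ctn; auto.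
  assert (K x0 = 0) by (unfold K; exact (RInt_point (V:=R_CompleteNormedModule) x0 (fun r => V2 r y))).
  fold (K x1).
  apply abs_le_inv in E0. apply abs_le_inv in E1. apply Rabs_le. lra.
Qed.

Lemma claim2 x0 x1 y0 y1 L eta : Rabs x0 + 1 <= L -> Rabs x1 + 1 <= L -> 0 < eta ->
  exists d, 0 < d /\ forall e, 0 < e -> e <= d -> e <= 1 -> forall y,
    Rmin y0 y1 <= y <= Rmax y0 y1 ->
   Rabs (RInt (fun x => V1 x y * Wd e x0 x1 x) (-L) L - (V1 x0 y - V1 x1 y)) <= eta.
Proof.
  intros H0 H1 Heta.
  assert (Hc1 : c2d V1) by apply cont2_fst, Hu.
  destruct (uniform_continuity_2d V1 (-L) L (Rmin y0 y1) (Rmax y0 y1) (fun x y _ _ => Hc1 x y)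
     (mkposreal (eta/2) ltac:(lra))) as [d Hd]. simpl in Hd.
  exists (d / 2). split. pose proof (cond_pos d); lra.
  intros e He Hed He1 y Hy.
  rewrite (RInt_ext _ (fun x => T e (x - x0) * V1 x y - T e (x - x1) * V1 x y)).
  2: { intros x _. unfold Wd. Req; ring. }
  rewrite RIminus.
  2, 3: apply exRI_all; intro; apply ctn_mult; [apply ctn_shift, T_ctn; auto|apply c2_1, Hc1].
  assert (B : forall c, Rabs c + 1 <= L -> Rabs (RInt (fun x => T e (x - c) * V1 x y) (-L) L - V1 c y) <= eta / 2).
  { intros c Hc. pose proof (Rle_abs c). pose proof (Rle_abs (-c)). rewrite Rabs_Ropp in *.
    apply (AI (fun x => V1 x y)); try lra. intros; apply c2_1, Hc1.
    intros x Hx. left. apply abs_le_inv in Hx. apply Hd; try lra.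
    rewrite Rabs_minus_sym. pose proof (cond_pos d). apply Rle_lt_trans with e. apply Rabs_le; lra. lra.
    unfold Rminus; rewrite Rplus_opp_r, Rabs_R0. apply cond_pos. }
  pose proof (B x0 H0) as B0. pose proof (B x1 H1) as B1.
  apply abs_le_inv in B0. apply abs_le_inv in B1. apply Rabs_le. lra.
Qed.

Lemma flux x0 x1 y0 y1 :
  RInt (fun r => V2 r y1) x0 x1 - RInt (fun r => V2 r y0) x0 x1
  = RInt (fun s => V1 x0 s - V1 x1 s) y0 y1.
Proof.
  assert (Hc1 : c2d V1) by apply cont2_fst, Hu.
  assert (Hc2 : c2d V2) by apply cont2_snd, Hu.
  set (L := Rabs x0 + Rabs x1 + Rabs y0 + Rabs y1 + 2).
  assert (Hx0 : Rabs x0 + 1 <= L) by (unfold L; pose proof (Rabs_pos x1); pose proof (Rabs_pos y0); pose proof (Rabs_pos y1); lra).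
  assert (Hx1 : Rabs x1 + 1 <= L) by (unfold L; pose proof (Rabs_pos x0); pose proof (Rabs_pos y0); pose proof (Rabs_pos y1); lra).
  assert (Hy0 : Rabs y0 + 1 <= L) by (unfold L; pose proof (Rabs_pos x1); pose proof (Rabs_pos x0); pose proof (Rabs_pos y1); lra).
  assert (Hy1 : Rabs y1 + 1 <= L) by (unfold L; pose proof (Rabs_pos x1); pose proof (Rabs_pos y0); pose proof (Rabs_pos x0); lra).
  apply Rminus_diag_uniq. apply small_zero. intros eta Heta.
  set (eta' := eta / (4 + 2 * Rabs (y1 - y0))).
  assert (Heta' : 0 < eta') by (unfold eta'; apply Rdiv_lt_0_compat; auto; pose proof (Rabs_pos (y1 - y0)); lra).
  destruct (claim1 x0 x1 y0 L eta' Hx0 Hx1 Heta') as [da [Hda Ea]].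
  destruct (claim1 x0 x1 y1 L eta' Hx0 Hx1 Heta') as [db [Hdb Eb]].
  destruct (claim2 x0 x1 y0 y1 L eta' Hx0 Hx1 Heta') as [dc [Hdc Ec]].
  set (e := Rmin (Rmin da db) (Rmin dc 1)).
  assert (He : 0 < e) by (unfold e; repeat apply Rmin_glb_lt; lra).
  assert (e <= da /\ e <= db /\ e <= dc /\ e <= 1) as (E1 & E2 & E3 & E4).
  { unfold e. pose proof (Rmin_l (Rmin da db) (Rmin dc 1)). pose proof (Rmin_r (Rmin da db) (Rmin dc 1)).
    pose proof (Rmin_l da db). pose proof (Rmin_r da db). pose proof (Rmin_l dc 1). pose proof (Rmin_r dc 1). lra. }
  specialize (Ea e He E1 E4). specialize (Eb e He E2 E4). specialize (Ec e He E3 E4).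
  assert (HS := stageA u Hu Hdiv (W e x0 x1) (Wd e x0 x1) L y0 y1
     (fun x => conj (W_deriv e x0 x1 x He) (Wd_ctn e x0 x1 x He))
     (fun z Hz => W_zero e x0 x1 L z He ltac:(lra) ltac:(lra) Hz) Hy0 Hy1).
  fold V1 V2 in HS.
  assert (HI : Rabs (RInt (fun y => RInt (fun x => V1 x y * Wd e x0 x1 x) (-L) L) y0 y1
                 - RInt (fun s => V1 x0 s - V1 x1 s) y0 y1) <= Rabs (y1 - y0) * eta').
  { rewrite <- RIminus.
    apply RIabs_bound. apply exRI_all. intro. apply ctn_minus.
    apply (param_ctn (fun x y => V1 x y * Wd e x0 x1 x)). apply c2d_mult_sep1; auto. intro; apply Wd_ctn; auto.
    apply ctn_minus; apply c2_2, Hc1.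
    intros t Ht. apply Ec; auto.
    apply exRI_all. intro. apply (param_ctn (fun x y => V1 x y * Wd e x0 x1 x)). apply c2d_mult_sep1; auto. intro; apply Wd_ctn; auto.
    apply exRI_all. intro. apply ctn_minus; apply c2_2, Hc1. }
  apply abs_le_inv in Ea. apply abs_le_inv in Eb. apply abs_le_inv in HI.
  assert (Rabs (y1 - y0) * eta' * 2 + 4 * eta' = eta).
  { unfold eta'. field. pose proof (Rabs_pos (y1 - y0)). lra. }
  pose proof (Rabs_pos (y1 - y0)).
  apply Rabs_le. split; nra.
Qed.
End Flux2.


Definition psi (u : pt -> pt) x y :=
  RInt (fun s => fst (u (x, s))) 0 y - RInt (fun r => snd (u (r, 0))) 0 x.

Lemma const_on_interval (J : R -> Prop) (g : R -> R) :
  (forall s t r, J s -> J t -> s <= r <= t -> J r) ->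
  (forall t, J t -> derivable_pt_lim g t 0) ->
  forall s t, J s -> J t -> g t = g s.
Proof.
  intros HJ Hg s t Hs Ht.
  destruct (Rtotal_order s t) as [H|[H|H]].
  - destruct (MVT_cor2 g (fun _ => 0) s t H) as [c [Hc _]].
    intros c Hc. apply Hg. apply (HJ s t); auto.
    lra.
  - subst; auto.
  - destruct (MVT_cor2 g (fun _ => 0) t s H) as [c [Hc _]].
    intros c Hc. apply Hg. apply (HJ t s); auto.
    lra.
Qed.

Section Psi.
Variable u : pt -> pt.
Hypothesis Hu : cont2 u.
Hypothesis Hdiv : div_free u.
Let V1 x y := fst (u (x, y)).
Let V2 x y := snd (u (x, y)).

Lemma psi_dy x y y' : psi u x y' - psi u x y = RInt (fun s => V1 x s) y y'.
Proof.
  assert (Hc1 : c2d V1) by apply cont2_fst, Hu.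
  unfold psi. rewrite <- (RIchasles (fun s => fst (u (x, s))) 0 y y').
  fold (V1 x). unfold V1. lra.
  all: apply exRI_all; intro; apply (c2_2 V1), Hc1.
Qed.

Lemma psi_dx x x' y : psi u x' y - psi u x y = - RInt (fun r => V2 r y) x x'.
Proof.
  assert (Hc1 : c2d V1) by apply cont2_fst, Hu.
  assert (Hc2 : c2d V2) by apply cont2_snd, Hu.
  pose proof (flux u Hu Hdiv x x' 0 y) as F. fold V1 V2 in F.
  rewrite RIminus in F by (apply exRI_all; intro; apply (c2_2 V1), Hc1).
  unfold psi. fold (V1 x') (V1 x).
  rewrite <- (RIchasles (fun r => snd (u (r, 0))) 0 x x') by (apply exRI_all; intro; apply (c2_1 V2), Hc2).
  fold (V2). unfold V1, V2 in *. lra.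
Qed.

Lemma psi_diff x y : differentiable_pt_lim (psi u) x y (- V2 x y) (V1 x y).
Proof.
  assert (Hc1 : c2d V1) by apply cont2_fst, Hu.
  assert (Hc2 : c2d V2) by apply cont2_snd, Hu.
  intros eps.
  destruct (Hc1 x y (mkposreal (eps/2) ltac:(pose proof (cond_pos eps); lra))) as [d1 Hd1].
  destruct (Hc2 x y (mkposreal (eps/2) ltac:(pose proof (cond_pos eps); lra))) as [d2 Hd2].
  simpl in Hd1, Hd2.
  assert (Hd : 0 < Rmin d1 d2) by (apply Rmin_glb_lt; apply cond_pos).
  exists (mkposreal _ Hd). simpl. intros u' v Hu' Hv.
  pose proof (Rmin_l d1 d2). pose proof (Rmin_r d1 d2).
  replace (psi u u' v - psi u x y) with ((psi u u' v - psi u x v) + (psi u x v - psi u x y)) by ring.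
  rewrite psi_dx, psi_dy.
  replace (- RInt (fun r : R => V2 r v) x u' + RInt (fun s : R => V1 x s) y v -
     (- V2 x y * (u' - x) + V1 x y * (v - y)))
   with (- (RInt (fun r : R => V2 r v) x u' - (u' - x) * V2 x y) + (RInt (fun s : R => V1 x s) y v - (v - y) * V1 x y)) by ring.
  rewrite <- !RIconst.
  rewrite <- !RIminus.
  all: try (apply exRI_all; intro; first [apply ctn_const | apply (c2_1 V2), Hc2 | apply (c2_2 V1), Hc1]).
  eapply Rle_trans. apply Rabs_triang. rewrite Rabs_Ropp.
  assert (B1 : Rabs (RInt (fun x0 => V2 x0 v - V2 x y) x u') <= Rabs (u' - x) * (eps / 2)).
  { apply RIabs_bound. apply exRI_all; intro; apply ctn_minus; [apply (c2_1 V2), Hc2|apply ctn_const].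
    intros t Ht. left. apply Hd2; try lra.
    unfold Rmin, Rmax in Ht. destruct (Rle_dec x u'); apply Rabs_lt_between' in Hu'; apply Rabs_lt_between'; lra. }
  assert (B2 : Rabs (RInt (fun x0 => V1 x x0 - V1 x y) y v) <= Rabs (v - y) * (eps / 2)).
  { apply RIabs_bound. apply exRI_all; intro; apply ctn_minus; [apply (c2_2 V1), Hc1|apply ctn_const].
    intros t Ht. left. apply Hd1; try lra.
    unfold Rminus; rewrite Rplus_opp_r, Rabs_R0; lra.
    unfold Rmin, Rmax in Ht. destruct (Rle_dec y v); apply Rabs_lt_between' in Hv; apply Rabs_lt_between'; lra. }
  pose proof (Rmax_l (Rabs (u' - x)) (Rabs (v - y))). pose proof (Rmax_r (Rabs (u' - x)) (Rabs (v - y))).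
  pose proof (cond_pos eps). nra.
Qed.
End Psi.

Lemma psi_conserved u a J X : cont2 u -> div_free u -> open_int_set J -> J 0 ->
  is_solution u a J X -> forall t, J t ->
  psi u (fst (X t)) (snd (X t)) = psi u (fst a) (snd a).
Proof.
  intros Hu Hdiv [HJ _] HJ0 [HX0 HX] t Ht.
  rewrite <- HX0.
  apply (const_on_interval J (fun t => psi u (fst (X t)) (snd (X t)))); auto.
  intros s Hs. destruct (HX s Hs) as [D1 D2].
  pose proof (derivable_pt_lim_comp_2d (psi u) (fun t => fst (X t)) (fun t => snd (X t)) s
     _ _ _ _ (psi_diff u Hu Hdiv (fst (X s)) (snd (X s))) D1 D2) as H.
  assert (E : u (fst (X s), snd (X s)) = u (X s)) by (rewrite <- surjective_pairing; auto).
  rewrite E in H. replace 0 with (- snd (u (fst (X s), snd (X s))) * fst (u (X s)) + fst (u (X s)) * snd (u (X s))) by (rewrite E; ring).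
  exact H.
Qed.


Lemma MVT_gen f f' a b :
  (forall c, Rmin a b <= c <= Rmax a b -> derivable_pt_lim f c (f' c)) ->
  exists c, Rmin a b <= c <= Rmax a b /\ f b - f a = f' c * (b - a).
Proof.
  intro H. destruct (Rtotal_order a b) as [Hab|[Hab|Hab]].
  - assert (H' : forall c, a <= c <= b -> derivable_pt_lim f c (f' c)).
    { intros c Hc; apply H; rewrite Rmin_left, Rmax_right; lra. }
    destruct (MVT_cor2 f f' a b Hab H') as [c [Hc Hc']].
    exists c. rewrite Rmin_left, Rmax_right by lra. split; [lra|]. rewrite Hc. ring.
  - subst. exists b. split. split; [apply Rmin_l|apply Rmax_l]. ring.
  - assert (H' : forall c, b <= c <= a -> derivable_pt_lim f c (f' c)).
    { intros c Hc; apply H; rewrite Rmin_right, Rmax_left; lra. }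
    destruct (MVT_cor2 f f' b a Hab H') as [c [Hc Hc']].
    exists c. rewrite Rmin_right, Rmax_left by lra. split; [lra|]. lra.
Qed.

Lemma dpl_ctn f t l : derivable_pt_lim f t l -> ctn f t.
Proof. intro H. apply is_derive_Reals in H. eapply is_derive_ctn; eauto. Qed.

Lemma clamp_ctn a b z : a <= b -> ctn (fun z => Rmax a (Rmin b z)) z.
Proof.
  intro Hab. apply ctn_lip with (K := 1). lra. intro y.
  unfold Rmax, Rmin. repeat destruct Rle_dec; unfold Rabs; repeat destruct Rcase_abs; lra.
Qed.

Section Core.
Variables x1 y1 wx wy : R -> R.
Variables s del m M : R.
Hypothesis Hdel : 0 < del.
Hypothesis Hm : 0 < m.
Hypothesis HD : forall t, Rabs (t - s) < del -> derivable_pt_lim x1 t (wx t) /\ derivable_pt_lim y1 t (wy t).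
Hypothesis HB : forall t, Rabs (t - s) < del -> (m <= wx t <= M) /\ (m <= wy t <= M).
Hypothesis HC : forall t, Rabs (t - s) < del -> ctn wx t /\ ctn wy t.
Hypothesis HL : forall t t', Rabs (t - s) < del -> Rabs (t' - s) < del -> x1 t = y1 t' -> wx t = wy t'.
Hypothesis H0 : x1 s = y1 s.

Lemma inball_between a b c : Rabs (a - s) < del -> Rabs (b - s) < del ->
  Rmin a b <= c <= Rmax a b -> Rabs (c - s) < del.
Proof.
  intros Ha Hb Hc. apply Rabs_lt_between' in Ha. apply Rabs_lt_between' in Hb.
  apply Rabs_lt_between'. unfold Rmin, Rmax in Hc. destruct Rle_dec; lra.
Qed.

Lemma y_mvt a b : Rabs (a - s) < del -> Rabs (b - s) < del ->
  exists c, Rmin a b <= c <= Rmax a b /\ Rabs (c - s) < del /\ y1 b - y1 a = wy c * (b - a).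
Proof.
  intros Ha Hb. assert (H' : forall c, Rmin a b <= c <= Rmax a b -> derivable_pt_lim y1 c (wy c)).
  { intros c Hc. refine (proj2 (HD c _)). apply (inball_between a b c Ha Hb Hc). }
  destruct (MVT_gen y1 wy a b H') as [c [Hc E]].
  exists c. split; [auto|split; [apply (inball_between a b c Ha Hb Hc)|auto]].
Qed.
Lemma x_mvt a b : Rabs (a - s) < del -> Rabs (b - s) < del ->
  exists c, Rmin a b <= c <= Rmax a b /\ Rabs (c - s) < del /\ x1 b - x1 a = wx c * (b - a).
Proof.
  intros Ha Hb. assert (H' : forall c, Rmin a b <= c <= Rmax a b -> derivable_pt_lim x1 c (wx c)).
  { intros c Hc. refine (proj1 (HD c _)). apply (inball_between a b c Ha Hb Hc). }
  destruct (MVT_gen x1 wx a b H') as [c [Hc E]].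
  exists c. split; [auto|split; [apply (inball_between a b c Ha Hb Hc)|auto]].
Qed.

Lemma y_inj a b : Rabs (a - s) < del -> Rabs (b - s) < del -> y1 a = y1 b -> a = b.
Proof.
  intros Ha Hb E. destruct (y_mvt a b Ha Hb) as [c [_ [Hc E']]].
  destruct (HB c Hc) as [_ [Hw _]].
  assert (wy c * (b - a) = 0) by lra.
  apply Rmult_integral in H. destruct H; lra.
Qed.

Lemma core : exists d, 0 < d /\ forall t, Rabs (t - s) < d -> x1 t = y1 t.
Proof.
  assert (HmM : m <= M).
  { destruct (HB s) as [[? ?] _]. unfold Rminus; rewrite Rplus_opp_r, Rabs_R0; auto. lra. }
  assert (HM : 0 < M) by lra.
  set (d2 := m * del / (2 * M)).
  assert (Hd2 : 0 < d2) by (unfold d2; apply Rdiv_lt_0_compat; nra).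
  assert (Hd2' : d2 <= del / 2).
  { unfold d2. apply Rmult_le_reg_r with (2 * M). lra. field_simplify; try lra. nra. }
  assert (Hsd : Rabs (s - s) < del) by (unfold Rminus; rewrite Rplus_opp_r, Rabs_R0; auto).
  assert (Ylo : y1 (s - del / 2) <= y1 s - m * del / 2).
  { destruct (y_mvt (s - del/2) s) as [c [_ [Hc E]]]; auto.
    replace (s - del / 2 - s) with (- (del/2)) by ring. rewrite Rabs_Ropp, Rabs_right; lra.
    destruct (HB c Hc) as [_ [Hw _]]. nra. }
  assert (Yhi : y1 s + m * del / 2 <= y1 (s + del / 2)).
  { destruct (y_mvt s (s + del/2)) as [c [_ [Hc E]]]; auto.
    replace (s + del / 2 - s) with (del/2) by ring. rewrite Rabs_right; lra.
    destruct (HB c Hc) as [_ [Hw _]]. nra. }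
  assert (Xr : forall t, Rabs (t - s) < d2 -> Rabs (x1 t - x1 s) <= M * Rabs (t - s)).
  { intros t Ht. destruct (x_mvt s t) as [c [_ [Hc E]]]; auto. lra.
    rewrite E. rewrite Rabs_mult. destruct (HB c Hc) as [[Hw1 Hw2] _].
    rewrite (Rabs_right (wx c)) by lra. apply Rmult_le_compat_r. apply Rabs_pos. lra. }
  assert (Ex : forall t, exists t', Rabs (t - s) < d2 -> Rabs (t' - s) <= del / 2 /\ y1 t' = x1 t).
  { intro t. destruct (Rlt_dec (Rabs (t - s)) d2) as [Ht|Ht]; [|exists 0; intro; contradiction].
    set (g := fun z => y1 (Rmax (s - del/2) (Rmin (s + del/2) z))).
    assert (Hg : forall z, continuous g z).
    { intro z. apply ctn_continuous. unfold g. apply (ctn_comp (fun z => Rmax (s - del/2) (Rmin (s + del/2) z)) y1).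
      apply clamp_ctn; lra. eapply dpl_ctn. apply HD.
      apply Rabs_lt_between'. unfold Rmax, Rmin; repeat destruct Rle_dec; lra. }
    assert (Eg1 : g (s - del/2) = y1 (s - del/2)).
    { unfold g. f_equal. rewrite Rmin_right by lra. rewrite Rmax_right; lra. }
    assert (Eg2 : g (s + del/2) = y1 (s + del/2)).
    { unfold g. f_equal. rewrite Rmin_left by lra. rewrite Rmax_right; lra. }
    pose proof (Xr t Ht) as Xt. apply abs_le_inv in Xt.
    assert (M * Rabs (t - s) <= M * d2) by (apply Rmult_le_compat_l; lra).
    assert (M * d2 = m * del / 2) by (unfold d2; field; lra).
    destruct (IVT_gen_consistent g (s - del/2) (s + del/2) (x1 t) Hg) as [z [Hz Ez]].
    { rewrite Eg1, Eg2. rewrite Rmin_left, Rmax_right; lra. }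
    rewrite Rmin_left, Rmax_right in Hz by lra.
    exists z. intros _. split. apply Rabs_le; lra.
    rewrite <- Ez. unfold g. f_equal. rewrite Rmin_right by lra. rewrite Rmax_right; lra. }
  set (tau := fun t => epsilon (inhabits 0) (fun t' => Rabs (t - s) < d2 -> Rabs (t' - s) <= del / 2 /\ y1 t' = x1 t)).
  assert (Htau : forall t, Rabs (t - s) < d2 -> Rabs (tau t - s) <= del / 2 /\ y1 (tau t) = x1 t).
  { intro t. apply (epsilon_spec (inhabits 0) (fun t' => Rabs (t - s) < d2 -> Rabs (t' - s) <= del / 2 /\ y1 t' = x1 t)).
    apply Ex. }
  assert (Hts : tau s = s).
  { destruct (Htau s) as [H1 H2]. unfold Rminus; rewrite Rplus_opp_r, Rabs_R0; auto.
    apply y_inj; auto. lra. congruence. }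
  assert (Dtau : forall t, Rabs (t - s) < d2 -> derivable_pt_lim (fun t => tau t - t) t 0).
  { intros t Ht. replace 0 with (1 - 1) by ring.
    apply derivable_pt_lim_minus; [|apply derivable_pt_lim_id].
    intros eps Heps.
    destruct (Htau t Ht) as [Tt1 Tt2].
    assert (Ht' : Rabs (t - s) < del) by lra.
    assert (Htt : Rabs (tau t - s) < del) by lra.
    assert (Ew : wx t = wy (tau t)) by (apply HL; auto).
    destruct (HC t Ht') as [Cx _]. destruct (HC (tau t) Htt) as [_ Cy].
    destruct (Cx (eps * m / 2) ltac:(nra)) as [e1 [He1 E1]].
    destruct (Cy (eps * m / 2) ltac:(nra)) as [e2 [He2 E2]].
    set (r := d2 - Rabs (t - s)).
    assert (Hr : 0 < r) by (unfold r; lra).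
    assert (Hdel0 : 0 < Rmin e1 (Rmin (e2 * m / M) r)).
    { repeat apply Rmin_glb_lt; auto. apply Rdiv_lt_0_compat; nra. }
    exists (mkposreal _ Hdel0). simpl. intros h Hh0 Hh.
    pose proof (Rmin_l e1 (Rmin (e2 * m / M) r)). pose proof (Rmin_r e1 (Rmin (e2 * m / M) r)).
    pose proof (Rmin_l (e2 * m / M) r). pose proof (Rmin_r (e2 * m / M) r).
    assert (Hth : Rabs (t + h - s) < d2).
    { replace (t + h - s) with ((t - s) + h) by ring. eapply Rle_lt_trans. apply Rabs_triang. unfold r in *. lra. }
    destruct (Htau (t + h) Hth) as [Th1 Th2].
    set (k := tau (t + h) - tau t).
    destruct (x_mvt t (t + h)) as [eta [Heta1 [Heta2 Ex1]]]; auto. lra.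
    destruct (y_mvt (tau t) (tau (t + h))) as [xi [Hxi1 [Hxi2 Ey1]]]; auto. lra.
    rewrite Th2, Tt2 in Ey1. fold k in Ey1.
    replace (t + h - t) with h in Ex1 by ring.
    destruct (HB eta Heta2) as [[Bx1 Bx2] _]. destruct (HB xi Hxi2) as [_ [By1 By2]].
    assert (Ek : wy xi * k = wx eta * h) by lra.
    assert (Hk : Rabs k * m <= M * Rabs h).
    { assert (HH : Rabs (wy xi * k) = Rabs (wx eta * h)) by (rewrite Ek; auto).
      rewrite !Rabs_mult, (Rabs_right (wy xi)), (Rabs_right (wx eta)) in HH by lra.
      pose proof (Rabs_pos k); pose proof (Rabs_pos h). nra. }
    assert (Hk2 : Rabs k < e2).
    { apply Rmult_lt_reg_r with m; auto. eapply Rle_lt_trans; [apply Hk|].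
      apply Rmult_lt_reg_l with (/ M). apply Rinv_0_lt_compat; lra.
      replace (/ M * (M * Rabs h)) with (Rabs h) by (field; lra).
      replace (/ M * (e2 * m)) with (e2 * m / M) by (field; lra). lra. }
    assert (Hxi3 : Rabs (xi - tau t) < e2).
    { unfold k in Hk2. apply Rabs_lt_between' in Hk2. apply Rabs_lt_between'.
      unfold Rmin, Rmax in Hxi1; destruct Rle_dec; lra. }
    assert (Heta3 : Rabs (eta - t) < e1).
    { apply Rabs_def2 in Hh. apply Rabs_lt_between'.
      unfold Rmin, Rmax in Heta1; destruct Rle_dec; lra. }
    specialize (E1 eta Heta3). specialize (E2 xi Hxi3).
    replace (k / h - 1) with ((wx eta - wy xi) / wy xi).
    2: { apply Rmult_eq_reg_r with (h * wy xi). 2: { intro Hz; apply Rmult_integral in Hz; destruct Hz; lra. }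
         field_simplify; try lra. }
    unfold Rdiv. rewrite Rabs_mult. rewrite Rabs_inv. rewrite (Rabs_right (wy xi)) by lra.
    apply Rmult_lt_reg_r with (wy xi). lra.
    rewrite Rmult_assoc, Rinv_l, Rmult_1_r by lra.
    replace (wx eta - wy xi) with ((wx eta - wx t) + (wy (tau t) - wy xi)) by (rewrite Ew; ring).
    eapply Rle_lt_trans. apply Rabs_triang. rewrite (Rabs_minus_sym (wy (tau t))).
    nra. }
  exists d2. split; auto. intros t Ht.
  assert (Eg : tau t - t = tau s - s).
  { apply (const_on_interval (fun t => Rabs (t - s) < d2) (fun t => tau t - t)); auto.
    intros a b c Ha Hb Hc. apply Rabs_lt_between' in Ha. apply Rabs_lt_between' in Hb. apply Rabs_lt_between'. lra.
    unfold Rminus; rewrite Rplus_opp_r, Rabs_R0; auto. }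
  rewrite Hts in Eg. assert (tau t = t) by lra.
  destruct (Htau t Ht) as [_ E]. rewrite H in E. auto.
Qed.
End Core.


Lemma ctn_uX u (X : R -> pt) t : cont2 u -> ctn (fun t => fst (X t)) t -> ctn (fun t => snd (X t)) t ->
  ctn (fun t => fst (u (X t))) t /\ ctn (fun t => snd (u (X t))) t.
Proof.
  intros Hu H1 H2. 
  assert (K : forall e, 0 < e -> exists d, 0 < d /\ forall y, Rabs (y - t) < d -> dist2 (u (X y)) (u (X t)) < e).
  { intros e He. destruct (Hu (X t) e He) as [d [Hd Hd']].
    destruct (H1 (d/2) ltac:(lra)) as [d1 [Hd1 E1]].
    destruct (H2 (d/2) ltac:(lra)) as [d2 [Hd2 E2]].
    exists (Rmin d1 d2). split. apply Rmin_glb_lt; auto.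
    intros y Hy. apply Hd'. pose proof (Rmin_l d1 d2). pose proof (Rmin_r d1 d2).
    rewrite (surjective_pairing (X y)), (surjective_pairing (X t)). apply dist2_lt.
    apply E1; lra. apply E2; lra. }
  split; intros e He; destruct (K e He) as [d [Hd Hd']]; exists d; split; auto; intros y Hy.
  eapply Rle_lt_trans. apply dist2_fst. auto.
  eapply Rle_lt_trans. apply dist2_snd. auto.
Qed.

Lemma sol_ctn u a J X t : is_solution u a J X -> J t ->
  ctn (fun t => fst (X t)) t /\ ctn (fun t => snd (X t)) t.
Proof. intros [_ H] Ht. destruct (H t Ht). split; eapply dpl_ctn; eauto. Qed.

Lemma int_nonzero f a b m : 0 < m -> (forall z, ctn f z) ->
  (forall z, Rmin a b <= z <= Rmax a b -> m <= f z) -> RInt f a b = 0 -> a = b.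
Proof.
  intros Hm Hc Hf E. destruct (Rtotal_order a b) as [H|[H|H]]; auto; exfalso.
  - assert (Hl := RIlow f a b m ltac:(lra) (exRI_all f a b Hc)).
    assert (Hl' : m * (b - a) <= RInt f a b).
    { apply Hl. intros t Ht. apply Hf. rewrite Rmin_left, Rmax_right; lra. }
    nra.
  - rewrite RIswap in E by (apply exRI_all; auto).
    assert (Hl := RIlow f b a m ltac:(lra) (exRI_all f b a Hc)).
    assert (Hl' : m * (a - b) <= RInt f b a).
    { apply Hl. intros t Ht. apply Hf. rewrite Rmin_right, Rmax_left; lra. }
    nra.
Qed.

Lemma abs_sigma σ x : σ * σ = 1 -> Rabs (σ * x) = Rabs x.
Proof.
  intro H. rewrite Rabs_mult. assert (Rabs σ = 1).
  { assert (Rabs σ * Rabs σ = 1) by (rewrite <- Rabs_mult, H; apply Rabs_R1).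
    pose proof (Rabs_pos σ). nra. }
  rewrite H0; ring.
Qed.

Section Local.
Variable u : pt -> pt.
Hypothesis Hu : cont2 u.
Hypothesis Hdiv : div_free u.
Variable a : pt.
Variable J : R -> Prop.
Hypothesis HJ : open_int_set J.
Hypothesis HJ0 : J 0.
Variables X Y : R -> pt.
Hypothesis HX : is_solution u a J X.
Hypothesis HY : is_solution u a J Y.

Lemma psi_XY t t' : J t -> J t' -> psi u (fst (X t)) (snd (X t)) = psi u (fst (Y t')) (snd (Y t')).
Proof.
  intros Ht Ht'. rewrite (psi_conserved u a J X Hu Hdiv HJ HJ0 HX t Ht).
  rewrite (psi_conserved u a J Y Hu Hdiv HJ HJ0 HY t' Ht'). auto.
Qed.

Lemma nbhd s rho : J s -> X s = Y s -> 0 < rho -> exists d, 0 < d /\ forall t, Rabs (t - s) < d ->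
  J t /\ Rabs (fst (X t) - fst (X s)) < rho /\ Rabs (snd (X t) - snd (X s)) < rho /\
  Rabs (fst (Y t) - fst (X s)) < rho /\ Rabs (snd (Y t) - snd (X s)) < rho.
Proof.
  intros Hs Es Hr. destruct HJ as [_ HJo]. destruct (HJo s Hs) as [r0 [Hr0 H0]].
  destruct (sol_ctn u a J X s HX Hs) as [CX1 CX2].
  destruct (sol_ctn u a J Y s HY Hs) as [CY1 CY2].
  destruct (CX1 rho Hr) as [d1 [Hd1 E1]]. destruct (CX2 rho Hr) as [d2 [Hd2 E2]].
  destruct (CY1 rho Hr) as [d3 [Hd3 E3]]. destruct (CY2 rho Hr) as [d4 [Hd4 E4]].
  exists (Rmin (Rmin r0 d1) (Rmin d2 (Rmin d3 d4))). split.
  repeat apply Rmin_glb_lt; auto.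
  intros t Ht.
  pose proof (Rmin_l (Rmin r0 d1) (Rmin d2 (Rmin d3 d4))). pose proof (Rmin_r (Rmin r0 d1) (Rmin d2 (Rmin d3 d4))).
  pose proof (Rmin_l r0 d1). pose proof (Rmin_r r0 d1). pose proof (Rmin_l d2 (Rmin d3 d4)).
  pose proof (Rmin_r d2 (Rmin d3 d4)). pose proof (Rmin_l d3 d4). pose proof (Rmin_r d3 d4).
  rewrite Es. repeat split.
  apply H0; lra. rewrite <- Es. apply E1; lra. rewrite <- Es. apply E2; lra. apply E3; lra. apply E4; lra.
Qed.

Lemma local_fst s σ : J s -> X s = Y s -> σ * σ = 1 -> 0 < σ * fst (u (X s)) ->
  exists d, 0 < d /\ forall t, Rabs (t - s) < d -> X t = Y t.
Proof.
  intros Hs Es Hσ Hc.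
  set (c := σ * fst (u (X s))) in *.
  set (V1 := fun x y => fst (u (x, y))).
  assert (Hc1 : c2d V1) by apply cont2_fst, Hu.
  set (p1 := fst (X s)). set (p2 := snd (X s)).
  destruct (Hc1 p1 p2 (mkposreal (c/2) ltac:(lra))) as [rho Hrho]. simpl in Hrho.
  assert (HV : forall x y, Rabs (x - p1) < rho -> Rabs (y - p2) < rho -> c/2 <= σ * V1 x y <= 3 * c / 2).
  { intros x y Hx Hy. specialize (Hrho x y Hx Hy).
    assert (E : V1 p1 p2 = fst (u (X s))) by (unfold V1, p1, p2; rewrite <- surjective_pairing; auto).
    rewrite E in Hrho. rewrite <- (abs_sigma σ) in Hrho by auto.
    apply Rabs_def2 in Hrho. unfold c in *. lra. }
  destruct (nbhd s rho Hs Es (cond_pos rho)) as [d [Hd Hn]].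
  assert (HuX : forall t, u (X t) = u (fst (X t), snd (X t))) by (intro; rewrite <- surjective_pairing; auto).
  assert (HuY : forall t, u (Y t) = u (fst (Y t), snd (Y t))) by (intro; rewrite <- surjective_pairing; auto).
  assert (Lev : forall t t', Rabs (t - s) < d -> Rabs (t' - s) < d -> fst (X t) = fst (Y t') -> X t = Y t').
  { intros t t' Ht Ht' E.
    destruct (Hn t Ht) as (Jt & A1 & A2 & _). destruct (Hn t' Ht') as (Jt' & _ & _ & A3 & A4).
    pose proof (psi_XY t t' Jt Jt') as P. rewrite <- E in P.
    assert (Q := psi_dy u Hu (fst (X t)) (snd (X t)) (snd (Y t'))).
    rewrite <- P in Q. replace (psi u (fst (X t)) (snd (X t)) - psi u (fst (X t)) (snd (X t))) with 0 in Q by ring.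
    assert (Q' : RInt (fun z => σ * V1 (fst (X t)) z) (snd (X t)) (snd (Y t')) = 0).
    { rewrite RIscal. unfold V1. rewrite <- Q. Req; ring. apply exRI_all; intro; apply (c2_2 V1), Hc1. }
    apply int_nonzero with (m := c / 2) in Q'; try lra.
    - rewrite (surjective_pairing (X t)), (surjective_pairing (Y t')), E, Q'. auto.
    - intro z. apply ctn_mult. apply ctn_const. apply (c2_2 V1), Hc1.
    - intros z Hz. apply HV. auto. fold p2 in A2, A4.
      apply Rabs_def2 in A2. apply Rabs_def2 in A4. apply Rabs_lt_between'.
      unfold Rmin, Rmax in Hz; destruct Rle_dec; lra. }
  destruct (core (fun t => σ * fst (X t)) (fun t => σ * fst (Y t)) (fun t => σ * fst (u (X t))) (fun t => σ * fst (u (Y t)))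
     s d (c/2) (3 * c / 2)) as [d' [Hd' Hcore]]; auto; try lra.
  - intros t Ht. destruct (Hn t Ht) as (Jt & _). destruct HX as [_ DX]. destruct HY as [_ DY].
    destruct (DX t Jt) as [DX1 _]. destruct (DY t Jt) as [DY1 _].
    split; apply (derivable_pt_lim_scal (fun t => fst (_ t))); auto.
  - intros t Ht. destruct (Hn t Ht) as (Jt & A1 & A2 & A3 & A4).
    rewrite HuX, HuY. split; apply HV; auto.
  - intros t Ht. destruct (Hn t Ht) as (Jt & _).
    destruct (sol_ctn u a J X t HX Jt) as [C1 C2]. destruct (sol_ctn u a J Y t HY Jt) as [C3 C4].
    split; apply ctn_mult; try apply ctn_const.
    apply (ctn_uX u X t Hu C1 C2). apply (ctn_uX u Y t Hu C3 C4).
  - intros t t' Ht Ht' E. assert (E' : fst (X t) = fst (Y t')).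
    { apply (Rmult_eq_reg_l σ); auto. intro; subst; lra. }
    rewrite (Lev t t' Ht Ht' E'). auto.
  - rewrite Es; auto.
  - exists (Rmin d d'). split. apply Rmin_glb_lt; auto. intros t Ht.
    pose proof (Rmin_l d d'). pose proof (Rmin_r d d').
    apply Lev; try lra. specialize (Hcore t ltac:(lra)).
    apply (Rmult_eq_reg_l σ); auto. intro; subst; lra.
Qed.
Lemma local_snd s σ : J s -> X s = Y s -> σ * σ = 1 -> 0 < σ * snd (u (X s)) ->
  exists d, 0 < d /\ forall t, Rabs (t - s) < d -> X t = Y t.
Proof.
  intros Hs Es Hσ Hc.
  set (c := σ * snd (u (X s))) in *.
  set (V1 := fun x y => snd (u (x, y))).
  assert (Hc1 : c2d V1) by apply cont2_snd, Hu.
  set (p1 := fst (X s)). set (p2 := snd (X s)).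
  destruct (Hc1 p1 p2 (mkposreal (c/2) ltac:(lra))) as [rho Hrho]. simpl in Hrho.
  assert (HV : forall x y, Rabs (x - p1) < rho -> Rabs (y - p2) < rho -> c/2 <= σ * V1 x y <= 3 * c / 2).
  { intros x y Hx Hy. specialize (Hrho x y Hx Hy).
    assert (E : V1 p1 p2 = snd (u (X s))) by (unfold V1, p1, p2; rewrite <- surjective_pairing; auto).
    rewrite E in Hrho. rewrite <- (abs_sigma σ) in Hrho by auto.
    apply Rabs_def2 in Hrho. unfold c in *. lra. }
  destruct (nbhd s rho Hs Es (cond_pos rho)) as [d [Hd Hn]].
  assert (HuX : forall t, u (X t) = u (fst (X t), snd (X t))) by (intro; rewrite <- surjective_pairing; auto).
  assert (HuY : forall t, u (Y t) = u (fst (Y t), snd (Y t))) by (intro; rewrite <- surjective_pairing; auto).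
  assert (Lev : forall t t', Rabs (t - s) < d -> Rabs (t' - s) < d -> snd (X t) = snd (Y t') -> X t = Y t').
  { intros t t' Ht Ht' E.
    destruct (Hn t Ht) as (Jt & A1 & A2 & _). destruct (Hn t' Ht') as (Jt' & _ & _ & A3 & A4).
    pose proof (psi_XY t t' Jt Jt') as P. rewrite <- E in P.
    assert (Q := psi_dx u Hu Hdiv (fst (Y t')) (fst (X t)) (snd (X t))).
    rewrite P in Q. replace (psi u (fst (Y t')) (snd (X t)) - psi u (fst (Y t')) (snd (X t))) with 0 in Q by ring.
    assert (Q' : RInt (fun z => σ * V1 z (snd (X t))) (fst (Y t')) (fst (X t)) = 0).
    { rewrite RIscal. unfold V1. replace (RInt (fun z => snd (u (z, snd (X t)))) (fst (Y t')) (fst (X t))) with 0 by lra. Req; ring. apply exRI_all; intro; apply (c2_1 V1), Hc1. }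
    apply int_nonzero with (m := c / 2) in Q'; try lra.
    - rewrite (surjective_pairing (X t)), (surjective_pairing (Y t')), E, Q'. auto.
    - intro z. apply ctn_mult. apply ctn_const. apply (c2_1 V1), Hc1.
    - intros z Hz. apply HV. 2: auto. fold p1 in A1, A3.
      apply Rabs_def2 in A1. apply Rabs_def2 in A3. apply Rabs_lt_between'.
      unfold Rmin, Rmax in Hz; destruct Rle_dec; lra. }
  destruct (core (fun t => σ * snd (X t)) (fun t => σ * snd (Y t)) (fun t => σ * snd (u (X t))) (fun t => σ * snd (u (Y t)))
     s d (c/2) (3 * c / 2)) as [d' [Hd' Hcore]]; auto; try lra.
  - intros t Ht. destruct (Hn t Ht) as (Jt & _). destruct HX as [_ DX]. destruct HY as [_ DY].
    destruct (DX t Jt) as [_ DX1]. destruct (DY t Jt) as [_ DY1].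
    split; apply (derivable_pt_lim_scal (fun t => snd (_ t))); auto.
  - intros t Ht. destruct (Hn t Ht) as (Jt & A1 & A2 & A3 & A4).
    rewrite HuX, HuY. split; apply HV; auto.
  - intros t Ht. destruct (Hn t Ht) as (Jt & _).
    destruct (sol_ctn u a J X t HX Jt) as [C1 C2]. destruct (sol_ctn u a J Y t HY Jt) as [C3 C4].
    split; apply ctn_mult; try apply ctn_const.
    apply (ctn_uX u X t Hu C1 C2). apply (ctn_uX u Y t Hu C3 C4).
  - intros t t' Ht Ht' E. assert (E' : snd (X t) = snd (Y t')).
    { apply (Rmult_eq_reg_l σ); auto. intro; subst; lra. }
    rewrite (Lev t t' Ht Ht' E'). auto.
  - rewrite Es; auto.
  - exists (Rmin d d'). split. apply Rmin_glb_lt; auto. intros t Ht.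
    pose proof (Rmin_l d d'). pose proof (Rmin_r d d').
    apply Lev; try lra. specialize (Hcore t ltac:(lra)).
    apply (Rmult_eq_reg_l σ); auto. intro; subst; lra.
Qed.
End Local.


Lemma continuation_fwd (P J : R -> Prop) : open_int_set J -> J 0 -> P 0 ->
  (forall s, J s -> P s -> exists d, 0 < d /\ forall t, Rabs (t - s) < d -> P t) ->
  (forall s, J s -> (forall e, 0 < e -> exists q, Rabs (q - s) < e /\ P q) -> P s) ->
  forall t, J t -> 0 <= t -> P t.
Proof.
  intros [HJc _] HJ0 HP0 Hloc Hcl t Ht Ht0.
  set (E := fun r => 0 <= r <= t /\ forall q, 0 <= q <= r -> P q).
  assert (HE0 : E 0) by (split; [lra|intros q Hq; replace q with 0 by lra; auto]).
  assert (Hb : bound E) by (exists t; intros r [Hr _]; lra).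
  destruct (completeness E Hb (ex_intro _ 0 HE0)) as [sg [Hub Hlub]].
  assert (Hs0 : 0 <= sg) by (apply Hub; auto).
  assert (Hst : sg <= t) by (apply Hlub; intros r [Hr _]; lra).
  assert (Js : J sg) by (apply (HJc 0 t); auto).
  assert (Hbelow : forall q, 0 <= q < sg -> P q).
  { intros q Hq. apply NNPP. intro Hn.
    assert (sg <= q). { apply Hlub. intros r [Hr1 Hr2]. destruct (Rle_dec r q); auto.
      exfalso. apply Hn, Hr2. lra. }
    lra. }
  assert (Ps : P sg).
  { apply Hcl; auto. intros e He. destruct (Req_dec sg 0) as [Z|NZ].
    - exists 0. rewrite Z. split; auto. unfold Rminus; rewrite Rplus_opp_r, Rabs_R0; auto.
    - exists (Rmax 0 (sg - e/2)). split.
      + unfold Rmax; destruct Rle_dec; apply Rabs_lt_between'; lra.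
      + apply Hbelow. unfold Rmax; destruct Rle_dec; lra. }
  destruct (Hloc sg Js Ps) as [d [Hd Hd']].
  destruct (Rle_lt_dec t sg) as [H|H].
  - replace t with sg by lra. auto.
  - exfalso. set (r := Rmin t (sg + d/2)).
    assert (E r).
    { split. unfold r; split. apply Rmin_glb; lra. apply Rmin_l.
      intros q Hq. destruct (Rlt_le_dec q sg). apply Hbelow; lra.
      apply Hd'. pose proof (Rmin_r t (sg + d/2)). apply Rabs_lt_between'. unfold r in Hq. lra. }
    assert (r <= sg) by (apply Hub; auto).
    unfold r in H1. unfold Rmin in H1. destruct Rle_dec; lra.
Qed.

Lemma continuation (P J : R -> Prop) : open_int_set J -> J 0 -> P 0 ->
  (forall s, J s -> P s -> exists d, 0 < d /\ forall t, Rabs (t - s) < d -> P t) ->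
  (forall s, J s -> (forall e, 0 < e -> exists q, Rabs (q - s) < e /\ P q) -> P s) ->
  forall t, J t -> P t.
Proof.
  intros HJ HJ0 HP0 Hloc Hcl t Ht. destruct (Rle_dec 0 t).
  - eapply continuation_fwd; eauto.
  - replace t with (- - t) by ring.
    apply (continuation_fwd (fun r => P (- r)) (fun r => J (- r))); try lra.
    + destruct HJ as [HJc HJo]. split.
      * intros a b c Ha Hb Hc. apply (HJc (-b) (-a)); auto; lra.
      * intros x Hx. destruct (HJo (-x) Hx) as [r0 [Hr0 H0]]. exists r0. split; auto.
        intros y Hy. apply H0. replace (- y - - x) with (- (y - x)) by ring. rewrite Rabs_Ropp; auto.
    + rewrite Ropp_0; auto.
    + rewrite Ropp_0; auto.
    + intros s Hs Ps. destruct (Hloc (-s) Hs Ps) as [d [Hd H]]. exists d. split; auto.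
      intros t' Ht'. apply H. replace (- t' - - s) with (- (t' - s)) by ring. rewrite Rabs_Ropp; auto.
    + intros s Hs Hq. apply Hcl; auto. intros e He. destruct (Hq e He) as [q [Hq1 Hq2]].
      exists (- q). split; auto. replace (- q - - s) with (- (q - s)) by ring. rewrite Rabs_Ropp; auto.
    + rewrite Ropp_involutive; auto.
Qed.

Theorem theorem5p1 (u : pt -> pt) (D : pt -> Prop) :
  cont2 u -> div_free u -> domain2 D ->
  (forall p, D p -> u p <> (0, 0)) ->
  forall (a : pt), D a ->
  forall (J : R -> Prop), open_int_set J -> J 0 ->
  forall X Y : R -> pt,
    is_solution u a J X -> is_solution u a J Y ->
    (forall t, J t -> D (X t)) ->
    forall t, J t -> X t = Y t.
Proof.
  intros Hu Hdiv _ Hu0 a _ J HJ HJ0 X Y HX HY HXD.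
  apply (continuation (fun t => X t = Y t) J); auto.
  - destruct HX as [HX0 _]. destruct HY as [HY0 _]. congruence.
  - intros s Hs Es.
    assert (Hn : u (X s) <> (0, 0)) by (apply Hu0, HXD; auto).
    destruct (Req_dec (fst (u (X s))) 0) as [Z1|NZ1].
    + destruct (Req_dec (snd (u (X s))) 0) as [Z2|NZ2].
      * exfalso. apply Hn. rewrite (surjective_pairing (u (X s))), Z1, Z2. auto.
      * destruct (Rlt_le_dec 0 (snd (u (X s)))).
        -- apply (local_snd u Hu Hdiv a J HJ HJ0 X Y HX HY s 1); auto; lra.
        -- apply (local_snd u Hu Hdiv a J HJ HJ0 X Y HX HY s (-1)); auto. ring.
           assert (snd (u (X s)) < 0) by lra. lra.
    + destruct (Rlt_le_dec 0 (fst (u (X s)))).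
      * apply (local_fst u Hu Hdiv a J HJ HJ0 X Y HX HY s 1); auto; lra.
      * apply (local_fst u Hu Hdiv a J HJ HJ0 X Y HX HY s (-1)); auto. ring.
        assert (fst (u (X s)) < 0) by lra. lra.
  - intros s Hs Hq.
    destruct (sol_ctn u a J X s HX Hs) as [C1 C2].
    destruct (sol_ctn u a J Y s HY Hs) as [C3 C4].
    assert (K : forall f g : R -> R, ctn f s -> ctn g s ->
       (forall e, 0 < e -> exists q, Rabs (q - s) < e /\ f q = g q) -> f s = g s).
    { intros f g Cf Cg H. apply Rminus_diag_uniq. apply small_zero. intros eta Heta.
      destruct (Cf (eta/2) ltac:(lra)) as [d1 [Hd1 E1]].
      destruct (Cg (eta/2) ltac:(lra)) as [d2 [Hd2 E2]].
      destruct (H (Rmin d1 d2) ltac:(apply Rmin_glb_lt; auto)) as [q [Hq1 Hq2]].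
      pose proof (Rmin_l d1 d2). pose proof (Rmin_r d1 d2).
      specialize (E1 q ltac:(lra)). specialize (E2 q ltac:(lra)).
      rewrite Hq2 in E1. apply Rabs_def2 in E1. apply Rabs_def2 in E2. apply Rabs_le. lra. }
    rewrite (surjective_pairing (X s)), (surjective_pairing (Y s)).
    f_equal.
    + apply (K (fun t => fst (X t)) (fun t => fst (Y t))); auto.
      intros e He. destruct (Hq e He) as [q [H1 H2]]. exists q. rewrite H2. auto.
    + apply (K (fun t => snd (X t)) (fun t => snd (Y t))); auto.
      intros e He. destruct (Hq e He) as [q [H1 H2]]. exists q. rewrite H2. auto.
Qed.
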